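(* Let $G_b$ be a bipartite graph with left vertices $r_1,\dots,r_n$ and right vertices $1,\dots,n$, and let $\Omega$ be the (assumed nonempty) set of perfect matchings of $G_b$, with uniform prior $\Phi\sim\mathrm{Unif}(\Omega)$. For $I\subseteq[n]$ and $\phi\in\Omega$ let $f(I,\phi)=|\Omega|-|\Omega^{(I,\phi)}|$. Then (i) $f$ is adaptive monotone and adaptive submodular with respect to the uniform prior on $\Omega$; and (ii) for every budget $K\in\{1,\dots,n\}$, the adaptive greedy policy $\pi^{g}$ with budget $K$ satisfies $F(\pi^{g})\ge (1-1/e)\max_{\pi}F(\pi)$, where the maximum is over all adaptive policies with budget $K$.
   Context: Each $\phi\in\Omega$ matches each right vertex $v$ to a unique left vertex $\phi(v)$; intervening on item $v\in[n]$ under realization $\phi$ yields the outcome $\phi(v)$ (the matching edge $(\phi(v),v)$). For $I\subseteq[n]$, $\Omega^{(I,\phi)}=\{g\in\Omega: g(v)=\phi(v)\ \forall v\in I\}$. A partial realization is a map $\psi$ from a set $\mathrm{dom}(\psi)\subseteq[n]$ to left vertices such that some $\phi\in\Omega$ agrees with $\psi$ on $\mathrm{dom}(\psi)$ (written $\phi\sim\psi$). For $v\notin\mathrm{dom}(\psi)$, the conditional expected marginal benefit is $\Delta(v\mid\psi)=\mathbb{E}[f(\mathrm{dom}(\psi)\cup\{v\},\Phi)-f(\mathrm{dom}(\psi),\Phi)\mid \Phi\sim\psi]$, where conditioning means $\Phi$ is uniform over $\{\phi\in\Omega:\phi\sim\psi\}$. $f$ is adaptive monotone if $\Delta(v\mid\psi)\ge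 0$ for all partial realizations $\psi$ and $v\notin\mathrm{dom}(\psi)$; adaptive submodular if $\Delta(v\mid\psi)\ge\Delta(v\mid\psi')$ whenever $\psi\subseteq\psi'$ (i.e. $\mathrm{dom}(\psi)\subseteq\mathrm{dom}(\psi')$ and $\psi'$ agrees with $\psi$ on $\mathrm{dom}(\psi)$) are partial realizations and $v\notin\mathrm{dom}(\psi')$. An adaptive policy with budget $K$ selects items $i_1,\dots,i_K$ sequentially, each $i_t$ being a function of the previous items and their observed outcomes $((i_1,\phi(i_1)),\dots,(i_{t-1},\phi(i_{t-1})))$; $I(\pi,\phi)$ is the set selected under realization $\phi$, and $F(\pi)=\mathbb{E}_{\Phi\sim\mathrm{Unif}(\Omega)}[f(I(\pi,\Phi),\Phi)]$. The adaptive greedy policy selects, at each step with current partial realization $\psi$, an item $v\notin\mathrm{dom}(\psi)$ maximizing $\Delta(v\mid\psi)$. *)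

(* Defs.v *)
From mathcomp Require Import all_boot all_order all_algebra.
From mathcomp Require Import reals sequences exp.
Set Implicit Arguments. Unset Strict Implicit. Unset Printing Implicit Defensive.
Import Order.TTheory GRing.Theory Num.Theory.
Local Open Scope ring_scope.

Section Matching.
Variables (R : realType) (n : nat).
(* Bipartite graph G_b: left vertex r_i is i : 'I_n, right vertex v is v : 'I_n;
   adj i v = true iff (r_i, v) is an edge. *)
Variable adj : 'I_n -> 'I_n -> bool.

(* A realization phi maps each right vertex v to its matched left vertex phi v. *)
Definition realization := {ffun 'I_n -> 'I_n}.

Definition Omega : {set realization} :=
  [set phi : realization | injectiveb phi && [forall v, adj (phi v) v]].

Definition OmegaI (I : {set 'I_n}) (phi : realization) : {set realization} :=
  [set g in Omega | [forall v in I, g v == phi v]].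

Definition f (I : {set 'I_n}) (phi : realization) : R :=
  (#|Omega|%:R - #|OmegaI I phi|%:R).

Definition pmap := {ffun 'I_n -> option 'I_n}.
Definition dom (psi : pmap) : {set 'I_n} := [set v | psi v != None].
Definition agrees (phi : realization) (psi : pmap) : bool :=
  [forall v, (psi v == None) || (psi v == Some (phi v))].
Definition partial_realization (psi : pmap) : Prop :=
  exists2 phi, phi \in Omega & agrees phi psi.
Definition subrealization (psi psi' : pmap) : Prop :=
  forall v, psi v != None -> psi' v = psi v.

(* Realizations consistent with psi: support of Phi | Phi ~ psi (uniform). *)
Definition consistent (psi : pmap) : {set realization} :=
  [set phi in Omega | agrees phi psi].

Definition Delta (v : 'I_n) (psi : pmap) : R :=
  (\sum_(phi in consistent psi) (f (dom psi :|: [set v]) phi - f (dom psi) phi))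
    / #|consistent psi|%:R.

Definition adaptive_monotone : Prop :=
  forall psi v, partial_realization psi -> v \notin dom psi -> 0 <= Delta v psi.

Definition adaptive_submodular : Prop :=
  forall psi psi' v, partial_realization psi -> partial_realization psi' ->
    subrealization psi psi' -> v \notin dom psi' -> Delta v psi' <= Delta v psi.

(* Adaptive (deterministic) policies: the next item is a function of the history
   of observed (item, outcome) pairs. *)
Definition history := seq ('I_n * 'I_n).
Definition policy := history -> 'I_n.

Fixpoint run (pi : policy) (phi : realization) (t : nat) : history :=
  match t with
  | 0 => [::]
  | t'.+1 => let h := run pi phi t' in rcons h (pi h, phi (pi h))
  end.

Definition psi_of (h : history) : pmap :=
  [ffun v => omap snd (ohead [seq p <- h | p.1 == v])].

Definition selected (pi : policy) (K : nat) (phi : realization) : {set 'I_n} :=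
  [set v | v \in map fst (run pi phi K)].

Definition Fval (pi : policy) (K : nat) : R :=
  (\sum_(phi in Omega) f (selected pi K phi) phi) / #|Omega|%:R.

Definition valid_policy (pi : policy) (K : nat) : Prop :=
  forall phi, phi \in Omega -> uniq (map fst (run pi phi K)).

(* Adaptive greedy policy with budget K (any tie-breaking): at every reachable
   step it picks an item outside the current domain maximizing Delta. *)
Definition greedy_policy (g : policy) (K : nat) : Prop :=
  forall phi t, phi \in Omega -> (t < K)%N ->
    let psi := psi_of (run g phi t) in
    g (run g phi t) \notin dom psi /\
    forall v, v \notin dom psi -> Delta v psi <= Delta (g (run g phi t)) psi.
End Matching.

(* Main.v *)
Require Import Defs.
From mathcomp Require Import all_boot all_order all_algebra.
From mathcomp Require Import reals sequences exp.
From mathcomp Require Import ring lra.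
Import Order.TTheory GRing.Theory Num.Theory.
Local Open Scope ring_scope.
Section Gen.
Variables (R : realType) (T : finType) (K : eqType) (k : T -> K).

Definition dd (x y : T) : R := (k x != k y)%:R.
Definition ssep (S : {set T}) : R := \sum_(x in S) \sum_(y in S) dd x y.

Lemma dd_ge0 x y : 0 <= dd x y. Proof. by rewrite /dd ler0n. Qed.
Lemma ddC x y : dd x y = dd y x. Proof. by rewrite /dd eq_sym. Qed.
Lemma dd_tri x y z : dd x y <= dd x z + dd y z.
Proof.
rewrite /dd; case: (eqVneq (k x) (k y)) => [->|H] /=; first by rewrite addr_ge0.
case: (eqVneq (k x) (k z)) => [E|_] /=; last by rewrite lerDl.
by rewrite add0r -E eq_sym H.
Qed.

Lemma ssep_ge0 S : 0 <= ssep S.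
Proof. by apply: sumr_ge0 => x _; apply: sumr_ge0 => y _; apply: dd_ge0. Qed.

Lemma ssep_mono (B C : {set T}) : B \subset C ->
  ssep B / #|B|%:R <= ssep C / #|C|%:R.
Proof.
move=> sBC.
have [->|/set0Pn [b bB]] := eqVneq B set0.
  by rewrite /ssep big_set0 mul0r divr_ge0 ?ssep_ge0.
have Bp : 0 < #|B|%:R :> R by rewrite ltr0n card_gt0; apply/set0Pn; exists b.
have Cp : 0 < #|C|%:R :> R.
  by rewrite ltr0n card_gt0; apply/set0Pn; exists b; apply: (subsetP sBC).
set D := C :\: B.
have split (F : T -> R) : \sum_(x in C) F x = \sum_(x in B) F x + \sum_(x in D) F x.
  by rewrite (big_setID B) (setIidPr sBC).
have cC : #|C|%:R = #|B|%:R + #|D|%:R :> R by rewrite -natrD -(cardsID B C) (setIidPr sBC).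
set bb := ssep B.
set bd := \sum_(x in B) \sum_(y in D) dd x y.
set ddd := \sum_(x in D) \sum_(y in D) dd x y.
have eC : ssep C = bb + bd + bd + ddd.
  rewrite /ssep split.
  under eq_bigr => x _ do rewrite split.
  under [X in _ + X]eq_bigr => x _ do rewrite split.
  rewrite !big_split /= -/bd.
  have -> : \sum_(i in D) \sum_(i0 in B) dd i i0 = bd.
    by rewrite /bd exchange_big /=; apply: eq_bigr => x _; apply: eq_bigr => y _; rewrite ddC.
  rewrite /bb /ssep /ddd; ring.
have tri : bb * #|D|%:R <= #|B|%:R * bd + #|B|%:R * bd.
  have -> : bb * #|D|%:R = \sum_(x in B) \sum_(y in B) \sum_(z in D) dd x y.
    rewrite /bb /ssep mulr_suml; apply: eq_bigr => x _; rewrite mulr_suml.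
    by apply: eq_bigr => y _; rewrite sumr_const mulr_natr.
  apply: le_trans (_ : \sum_(x in B) \sum_(y in B) \sum_(z in D) (dd x z + dd y z) <= _).
    by do 3 (apply: ler_sum => ? _); apply: dd_tri.
  under eq_bigr => x _ do (under eq_bigr => y _ do rewrite big_split /=; rewrite big_split /=).
  rewrite big_split /=; apply: lerD.
    rewrite /bd mulr_sumr; rewrite le_eqVlt; apply/orP; left; apply/eqP; apply: eq_bigr => x _.
    by rewrite sumr_const mulr_natl.
  by rewrite sumr_const mulr_natl.
have ge0 : 0 <= ddd * #|B|%:R by rewrite mulr_ge0 // /ddd; do 2 (apply: sumr_ge0 => ? _); apply: dd_ge0.
rewrite ler_pdivrMr // mulrAC ler_pdivlMr // eC cC.
nra.
Qed.
End Gen.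

Lemma avg (R : realType) (T : finType) (A : {set T}) (P : T -> {set T}) (X : T -> R) :
  (forall x, x \in A -> x \in P x) ->
  (forall x y, x \in A -> y \in P x -> P y = P x) ->
  (forall x, x \in A -> P x \subset A) ->
  \sum_(x in A) X x = \sum_(x in A) (\sum_(y in P x) X y) / #|P x|%:R.
Proof.
move=> Hs Heq Hsub.
have E1 x : x \in A -> (\sum_(y in P x) X y) / #|P x|%:R =
   \sum_(y in A) ((y \in P x)%:R / #|P x|%:R * X y).
  move=> xA; rewrite mulr_suml [RHS]big_mkcond [LHS]big_mkcond /=.
  apply: eq_bigr => y _; case: ifP => yP.
    by rewrite (subsetP (Hsub x xA) y yP) mul1r mulrC.
  by case: ifP => //; rewrite mul0r mul0r.
rewrite [RHS](eq_bigr _ (fun x xA => E1 x xA)) exchange_big /=.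
apply: eq_bigr => y yA.
rewrite -mulr_suml.
have E2 x : x \in A -> (y \in P x)%:R / #|P x|%:R = (x \in P y)%:R / #|P y|%:R :> R.
  move=> xA; case: (boolP (x \in P y)) => xP.
    have e1 := Heq y x yA xP.
    by rewrite e1 (Hs y yA).
  case: (boolP (y \in P x)) => yP; last by rewrite !mul0r.
  by move: xP; rewrite (Heq x y xA yP) (Hs x xA).
rewrite (eq_bigr _ E2) -mulr_suml.
have -> : \sum_(i in A) ((i \in P y)%:R : R) = #|P y|%:R.
  rewrite -sum1_card natr_sum [RHS]big_mkcond [LHS]big_mkcond /=.
  apply: eq_bigr => x _; case: (boolP (x \in P y)) => xP; case: (boolP (x \in A)) => xA //=.
  by rewrite (subsetP (Hsub y yA) x xP) in xA.
rewrite mulfV ?mul1r // pnatr_eq0 -lt0n card_gt0; apply/set0Pn; exists y; exact: Hs.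
Qed.
Section Core.
Variables (R : realType) (n : nat) (adj : 'I_n -> 'I_n -> bool).

Local Notation Om := (Omega adj).
Local Notation cls := (OmegaI adj).

Lemma in_cls (S : {set 'I_n}) phi y : (y \in cls S phi) = (y \in Om) && [forall v in S, y v == phi v].
Proof. by rewrite /OmegaI inE. Qed.

Lemma cls_self (S : {set 'I_n}) phi : phi \in Om -> phi \in cls S phi.
Proof. by move=> H; rewrite in_cls H /=; apply/forall_inP. Qed.

Lemma cls_sub (S S' : {set 'I_n}) phi : S \subset S' -> cls S' phi \subset cls S phi.
Proof.
move=> /subsetP sS; apply/subsetP => y; rewrite !in_cls => /andP[-> /forall_inP H] /=.
by apply/forall_inP => v /sS /H.
Qed.

Lemma cls_eq (S : {set 'I_n}) phi y : y \in cls S phi -> cls S y = cls S phi.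
Proof.
rewrite in_cls => /andP[_ /forall_inP H]; apply/setP => z; rewrite !in_cls.
case: (z \in Om) => //=; apply/forall_inP/forall_inP => H' v vS.
  by rewrite (eqP (H' v vS)) H.
by rewrite (eqP (H' v vS)) eq_sym H.
Qed.

Lemma cls_U1 (S : {set 'I_n}) v phi : cls (S :|: [set v]) phi = [set y in cls S phi | y v == phi v].
Proof.
apply/setP => y; rewrite in_cls [in RHS]inE in_cls -andbA; case: (y \in Om) => //=.
apply/forall_inP/andP => [H|[/forall_inP H1 H2] w].
  split; last by apply: H; rewrite !inE eqxx orbT.
  by apply/forall_inP => w wS; apply: H; rewrite inE wS.
by rewrite !inE => /orP[/H1|/eqP->].
Qed.

Lemma cls_sub_Om (S : {set 'I_n}) phi : cls S phi \subset Om.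
Proof. by apply/subsetP => y; rewrite in_cls => /andP[]. Qed.

Lemma cls0 phi : cls set0 phi = Om.
Proof. by apply/setP => y; rewrite in_cls; case: (y \in Om) => //=; apply/forall_inP => v; rewrite inE. Qed.

Definition dif (S : {set realization n}) v (x : realization n) : R :=
  #|[set y in S | x v != y v]|%:R.
Definition sep (S : {set realization n}) v : R := \sum_(x in S) dif S v x.

Lemma cardR (T : finType) (S : {set T}) (p : pred T) :
  #|[set y in S | p y]|%:R = \sum_(y in S) (p y)%:R :> R.
Proof.
rewrite -sum1_card natr_sum big_mkcond [RHS]big_mkcond /=; apply: eq_bigr => y _.
by rewrite inE; case: (y \in S); case: (p y).
Qed.

Lemma f_step (S : {set 'I_n}) v phi : f R adj (S :|: [set v]) phi - f R adj S phi = dif (cls S phi) v phi.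
Proof.
rewrite /f cls_U1 /dif.
have : #|cls S phi| = (#|[set y in cls S phi | y v == phi v]| + #|[set y in cls S phi | phi v != y v]|)%N.
  rewrite -(cardsID [set y : realization n | y v == phi v] (cls S phi)); congr (_ + _)%N.
  all: rewrite setIdE ?setDE //. apply: eq_card => y; by rewrite !inE eq_sym.
move=> ->; rewrite natrD; ring.
Qed.


Lemma run_snd (p : policy n) (phi : realization n) t : all (fun q => q.2 == phi q.1) (run p phi t).
Proof. by elim: t => [|t IH] //=; rewrite all_rcons /= eqxx. Qed.

Lemma psi_of_h (h : history n) (phi : realization n) v : all (fun q => q.2 == phi q.1) h ->
  psi_of h v = if v \in map fst h then Some (phi v) else None.
Proof.
rewrite /psi_of ffunE; elim: h => [|q h IH] //= /andP[/eqP Hq Hh].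
rewrite in_cons; case: ifP => [/eqP <-|Hv] /=; first by rewrite eqxx Hq.
by rewrite IH // eq_sym Hv.
Qed.

Lemma psi_of_run (p : policy n) phi t v :
  psi_of (run p phi t) v = if v \in selected p t phi then Some (phi v) else None.
Proof. by rewrite (@psi_of_h _ phi) ?run_snd // /selected inE. Qed.

Lemma dom_run (p : policy n) phi t : dom (psi_of (run p phi t)) = selected p t phi.
Proof. by apply/setP => v; rewrite /dom inE psi_of_run; case: ifP. Qed.

Lemma consistent_run (p : policy n) phi t : phi \in Om ->
  consistent adj (psi_of (run p phi t)) = cls (selected p t phi) phi.
Proof.
move=> Hphi; apply/setP => y; rewrite in_cls /consistent inE.
case: (y \in Om) => //=; rewrite /agrees.
apply/forallP/forall_inP => H v.
  by move=> vS; have := H v; rewrite psi_of_run vS /= => /eqP [->].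
by rewrite psi_of_run; case: ifP => // /H /eqP ->; rewrite eqxx orbT.
Qed.

Lemma selected0 (p : policy n) phi : selected p 0 phi = set0.
Proof. by apply/setP => v; rewrite !inE. Qed.

Lemma selectedS (p : policy n) phi t :
  selected p t.+1 phi = selected p t phi :|: [set p (run p phi t)].
Proof. by apply/setP => v; rewrite /selected /= !inE map_rcons mem_rcons in_cons orbC. Qed.

Lemma run_agree (p : policy n) t (phi y : realization n) :
  (forall v, v \in selected p t phi -> y v = phi v) -> run p y t = run p phi t.
Proof.
elim: t => [|t IH] //= H.
have IH' : run p y t = run p phi t.
  by apply: IH => v vS; apply: H; rewrite selectedS inE vS.
rewrite IH' H //.
by rewrite selectedS !inE eqxx orbT.
Qed.

Lemma run_cls (p : policy n) t (S : {set 'I_n}) (phi y : realization n) :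
  selected p t phi \subset S -> y \in cls S phi -> run p y t = run p phi t.
Proof.
move=> /subsetP sS; rewrite in_cls => /andP[_ /forall_inP H].
by apply: run_agree => v /sS /H /eqP.
Qed.


Lemma sepE S v : sep S v = @ssep R _ _ (fun x : realization n => x v) S.
Proof. by rewrite /sep /ssep; apply: eq_bigr => x _; rewrite /dif cardR. Qed.

Lemma sep_ge0 S v : 0 <= sep S v.
Proof. by rewrite sepE ssep_ge0. Qed.

Lemma sep_mono (B C : {set realization n}) v : B \subset C ->
  sep B v / #|B|%:R <= sep C v / #|C|%:R.
Proof. by move=> H; rewrite !sepE ssep_mono. Qed.

Lemma in_consistent psi y : (y \in consistent adj psi) = (y \in Om) && agrees y psi.
Proof. by rewrite /consistent in_set. Qed.

Lemma cls_dom psi phi : phi \in consistent adj psi -> cls (dom psi) phi = consistent adj psi.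
Proof.
rewrite in_consistent => /andP[_ /forallP Ha]; apply/setP => y; rewrite in_cls in_consistent.
case: (y \in Om) => //=; apply/forall_inP/forallP => H w.
  case: (boolP (psi w == None)) => //= Hw.
  have := Ha w; rewrite (negPf Hw) /= => /eqP ->.
  by rewrite (eqP (H w _)) // inE.
rewrite inE => Hw; have := H w; rewrite (negPf Hw) /=.
by have := Ha w; rewrite (negPf Hw) /= => /eqP -> /eqP [->].
Qed.

Lemma Delta_eq v psi : Delta R adj v psi = sep (consistent adj psi) v / #|consistent adj psi|%:R.
Proof.
rewrite /Delta /sep; congr (_ / _); apply: eq_bigr => phi Hphi.
by rewrite f_step cls_dom.
Qed.


Lemma f_mono (S S' : {set 'I_n}) phi : S \subset S' -> f R adj S phi <= f R adj S' phi.
Proof.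
move=> H; rewrite /f lerD2l lerN2 ler_nat; apply: subset_leq_card; exact: cls_sub.
Qed.

Lemma f_ge0 (S : {set 'I_n}) phi : 0 <= f R adj S phi.
Proof. by rewrite /f subr_ge0 ler_nat; apply: subset_leq_card; exact: cls_sub_Om. Qed.

Lemma sep_const (C : {set realization n}) v : (forall x y, x \in C -> y \in C -> x v = y v) ->
  sep C v = 0.
Proof.
move=> H; rewrite /sep big1 // => x xC; rewrite /dif.
have -> : [set y in C | x v != y v] = set0.
  by apply/setP => y; rewrite !inE; case: (boolP (y \in C)) => //= yC; rewrite (H x y) ?eqxx.
by rewrite cards0.
Qed.

Lemma greedy_step (g : policy n) K i phi v : greedy_policy R adj g K -> (i < K)%N -> phi \in Om ->
  sep (cls (selected g i phi) phi) v / #|cls (selected g i phi) phi|%:R <=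
  sep (cls (selected g i phi) phi) (g (run g phi i)) / #|cls (selected g i phi) phi|%:R.
Proof.
move=> Hg Hi Hphi.
move: (Hg phi i Hphi Hi) => /= [_ Hmax].
case: (boolP (v \in selected g i phi)) => Hv.
  rewrite sep_const ?mul0r ?divr_ge0 ?sep_ge0 //.
  move=> x y; rewrite !in_cls => /andP[_ /forall_inP Hx] /andP[_ /forall_inP Hy].
  by rewrite (eqP (Hx v Hv)) (eqP (Hy v Hv)).
have := Hmax v; rewrite dom_run => /(_ Hv).
by rewrite !Delta_eq consistent_run.
Qed.

Lemma key (g pi : policy n) K i : greedy_policy R adj g K -> (i < K)%N ->
  \sum_(phi in Om) (f R adj (selected pi K phi) phi - f R adj (selected g i phi) phi)
  <= K%:R * \sum_(phi in Om) (f R adj (selected g i.+1 phi) phi - f R adj (selected g i phi) phi).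
Proof.
move=> Hg Hi.
pose U t phi := selected g i phi :|: selected pi t phi.
apply: le_trans (_ : \sum_(phi in Om) (f R adj (U K phi) phi - f R adj (selected g i phi) phi) <= _).
  by apply: ler_sum => phi _; rewrite lerD2r f_mono // subsetUr.
have tel phi : f R adj (U K phi) phi - f R adj (selected g i phi) phi =
   \sum_(0 <= t < K) (f R adj (U t.+1 phi) phi - f R adj (U t phi) phi).
  by rewrite telescope_sumr // /U selected0 setU0.
rewrite (eq_bigr _ (fun phi _ => tel phi)) exchange_big /=.
rewrite -[K in K%:R]subn0 mulr_natl -sumr_const_nat.
apply: ler_sum => t _.
have eL phi : f R adj (U t.+1 phi) phi - f R adj (U t phi) phi =
   dif (cls (U t phi) phi) (pi (run pi phi t)) phi.
  by rewrite /U selectedS setUA f_step.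
have eR phi : f R adj (selected g i.+1 phi) phi - f R adj (selected g i phi) phi =
   dif (cls (selected g i phi) phi) (g (run g phi i)) phi.
  by rewrite selectedS f_step.
rewrite (eq_bigr _ (fun phi _ => eL phi)) (eq_bigr _ (fun phi _ => eR phi)).
pose B phi := cls (U t phi) phi.
pose C phi := cls (selected g i phi) phi.
have invB phi y : y \in B phi -> U t y = U t phi /\ run pi y t = run pi phi t.
  move=> yB.
  have e1 : run g y i = run g phi i by apply: (@run_cls g i (U t phi) phi y _ yB); rewrite subsetUl.
  have e2 : run pi y t = run pi phi t by apply: (@run_cls pi t (U t phi) phi y _ yB); rewrite subsetUr.
  by rewrite /U /selected e1 e2.
have invC phi y : y \in C phi -> run g y i = run g phi i.
  by move=> yC; apply: (@run_cls g i _ phi y _ yC).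
rewrite (@avg R _ Om B (fun phi => dif (B phi) (pi (run pi phi t)) phi)); first last.
- by move=> x _; apply: cls_sub_Om.
- move=> x y _ yB; have [e1 _] := invB x y yB.
  by rewrite /B e1; apply: cls_eq.
- by move=> x xO; apply: cls_self.
rewrite [X in _ <= X](@avg R _ Om C (fun phi => dif (C phi) (g (run g phi i)) phi)); first last.
- by move=> x _; apply: cls_sub_Om.
- move=> x y _ yC; rewrite /C /selected (invC x y yC); exact: cls_eq.
- by move=> x xO; apply: cls_self.
apply: ler_sum => phi Hphi.
have -> : \sum_(y in B phi) dif (B y) (pi (run pi y t)) y = sep (B phi) (pi (run pi phi t)).
  apply: eq_bigr => y yB; have [e1 e2] := invB phi y yB.
  by rewrite /B e1 e2 (cls_eq _ _ _ yB).
have -> : \sum_(y in C phi) dif (C y) (g (run g y i)) y = sep (C phi) (g (run g phi i)).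
  apply: eq_bigr => y yC.
  by rewrite /C /selected (invC phi y yC) -/(selected g i phi) (cls_eq _ _ _ yC).
apply: le_trans (sep_mono _ _ (pi (run pi phi t)) (cls_sub _ _ phi (subsetUl (selected g i phi) (selected pi t phi)))) _.
exact: (greedy_step g K i phi _ Hg Hi Hphi).
Qed.

End Core.

Lemma recur (R: realType) (K:nat) (a : nat -> R) (r : R): (0 < K)%N -> a 0%N = 0 -> 0 <= r ->
  (forall i, (i < K)%N -> r - a i <= K%:R * (a i.+1 - a i)) ->
  (1 - (expR (1:R))^-1) * r <= a K.
Proof.
move=> K0 a0 r0 H.
set q : R := 1 - K%:R^-1.
have Kp : 0 < K%:R :> R by rewrite ltr0n.
have q0 : 0 <= q.
  by rewrite /q subr_ge0 invf_le1 // ?ler1n.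
have Hi : forall i, (i <= K)%N -> r - a i <= q ^+ i * r.
  elim=> [|i IH] Hi; first by rewrite a0 expr0 mul1r subr0.
  have IH' := IH (ltnW Hi).
  have Hs := H i Hi.
  have Hd : (r - a i) / K%:R <= a i.+1 - a i by rewrite ler_pdivrMr // mulrC.
  have : r - a i.+1 <= q * (r - a i).
    rewrite /q mulrBl mul1r mulrC.
    have -> : r - a i.+1 = (r - a i) - (a i.+1 - a i) by ring.
    by rewrite lerD2l lerN2.
  move/le_trans; apply.
  by rewrite exprS -mulrA ler_wpM2l.
have HK := Hi K (leqnn K).
have qe : q ^+ K <= (expR 1)^-1.
  have qx : q <= expR (- K%:R^-1).
    by rewrite /q -[_ - _]/(1 + - K%:R^-1) expR_ge1Dx.
  have : q ^+ K <= expR (- K%:R^-1) ^+ K.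
    by rewrite lerXn2r // ?nnegrE ?expR_ge0.
  by rewrite -expRM_natl mulrN mulfV ?gt_eqF // expRN.
have : q ^+ K * r <= (expR 1)^-1 * r by rewrite ler_wpM2r.
move: HK; rewrite mulrBl mul1r; lra.
Qed.

Theorem theorem2 (R : realType) (n : nat) (adj : 'I_n -> 'I_n -> bool) :
  Omega adj != set0 ->
  (adaptive_monotone R adj /\ adaptive_submodular R adj) /\
  (forall K : nat, (1 <= K <= n)%N ->
     forall g : policy n, greedy_policy R adj g K ->
     forall pi : policy n, valid_policy adj pi K ->
       (1 - (expR (1 : R))^-1) * Fval R adj pi K <= Fval R adj g K).
Proof.
move=> _; split; [split|].
- move=> psi v _ _; rewrite Delta_eq; exact: divr_ge0 (sep_ge0 _ _ _ _) (ler0n _ _).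
- move=> psi psi' v _ _ Hsub _; rewrite !Delta_eq; apply: sep_mono.
  apply/subsetP => y; rewrite !in_consistent => /andP[-> /forallP Ha] /=.
  apply/forallP => w; case: (boolP (psi w == None)) => //= Hw.
  have e := Hsub w Hw; have := Ha w; rewrite e (negPf Hw) /= => ->.
  done.
move=> K /andP[K1 _] g Hg pi _.
apply: recur => //.
- rewrite /Fval big1 ?mul0r // => phi _.
  by rewrite /f /selected /= -[[set v | v \in [::]]]/(selected g 0 phi) selected0 cls0 subrr.
- by rewrite /Fval divr_ge0 // sumr_ge0 // => phi _; apply: f_ge0.
move=> i Hi.
rewrite /Fval -mulrBl -sumrB -mulrBl -sumrB mulrA.
apply: ler_wpM2r; first by rewrite invr_ge0 ler0n.
exact: key.
Qed.
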